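(* For every $n\ge2$, the inverse NLFT map $\mathtt S_n\to\mathbb C^n$, $(\mathbf a,\mathbf b)\mapsto\boldsymbol\gamma$, is not uniformly continuous when $\mathtt S_n\subseteq\mathbb C^n\times\mathbb C^n$ and $\mathbb C^n$ carry the Euclidean metric. Explicitly, for $k\ge2$ the pairs $\mathbf a^{(k)}=(\frac1k,0,\dots,0,\sqrt{\frac12-\frac1{k^2}})$, $\mathbf b^{(k)}=(\sqrt{\frac12-\frac1{k^2}},0,\dots,0,-\frac1k)$ lie in $\mathtt S_n$, satisfy $\|\mathbf a^{(k+1)}-\mathbf a^{(k)}\|_2^2+\|\mathbf b^{(k+1)}-\mathbf b^{(k)}\|_2^2\le 10/k^4$, while their inverse NLFTs satisfy $\|\boldsymbol\gamma^{(k+1)}-\boldsymbol\gamma^{(k)}\|_2\ge1/\sqrt2$.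
   Context: For $(\mathbf a,\mathbf b)\in\mathbb C^n\times\mathbb C^n$ let $a(z)=\sum_{k=0}^{n-1}a_kz^{-k}$, $b(z)=\sum_{k=0}^{n-1}b_kz^k$, and $a^*(z):=\overline{a(1/\overline z)}$ (similarly $b^*$). $\mathtt S_n$ is the set of $(\mathbf a,\mathbf b)$ with $a_0$ real and positive and $aa^*+bb^*=1$. The NLFT of $\boldsymbol\gamma$ supported in $\{0,\dots,n-1\}$ is $\prod_{k=0}^{n-1}\frac{1}{\sqrt{1+|\gamma_k|^2}}\begin{pmatrix}1&\gamma_kz^k\\-\overline{\gamma_k}z^{-k}&1\end{pmatrix}=\begin{pmatrix}a&b\\-b^*&a^*\end{pmatrix}$ (ordered by increasing $k$); it is a bijection from such sequences onto $\mathtt S_n$, and its inverse is the inverse NLFT. *)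

(* Defs.v *)
From HB Require Import structures.
From mathcomp Require Import all_boot all_order all_algebra.
From mathcomp Require Import reals.
From mathcomp Require Export complex.
Set Implicit Arguments. Unset Strict Implicit. Unset Printing Implicit Defensive.
Import Order.TTheory GRing.Theory Num.Theory.
Local Open Scope ring_scope.
Local Open Scope complex_scope.

Section NLFT.
Variable C : numClosedFieldType.
Variable n : nat.

Definition la (a : 'I_n -> C) (z : C) : C := \sum_(k < n) a k * z ^- k.
Definition lb (b : 'I_n -> C) (z : C) : C := \sum_(k < n) b k * z ^+ k.
Definition lstar (f : C -> C) (z : C) : C := (f ((z^*)^-1))^*.

Definition mx2 (p q r s : C) : 'M[C]_2 :=
  \matrix_(i < 2, j < 2)
    (if (i : nat) == 0%N then (if (j : nat) == 0%N then p else q)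
     else (if (j : nat) == 0%N then r else s)).

(* S_n : a_0 real positive and a a^* + b b^* = 1 (as Laurent polynomials,
   i.e. at every nonzero z) *)
Definition inS (a b : 'I_n -> C) : Prop :=
  (forall i : 'I_n, (i : nat) = 0%N -> 0 < a i) /\
  (forall z : C, z != 0 ->
     la a z * lstar (la a) z + lb b z * lstar (lb b) z = 1).

Definition nlft_factor (g : C) (k : nat) (z : C) : 'M[C]_2 :=
  (sqrtC (1 + `|g| ^+ 2))^-1 *: mx2 1 (g * z ^+ k) (- g^* * z ^- k) 1.

Definition NLFT_mx (g : 'I_n -> C) (z : C) : 'M[C]_2 :=
  \prod_(k < n) nlft_factor (g k) k z.

Definition is_NLFT (g a b : 'I_n -> C) : Prop :=
  forall z : C, z != 0 ->
    NLFT_mx g z = mx2 (la a z) (lb b z) (- lstar (lb b) z) (lstar (la a) z).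

Definition dist2 (u v : 'I_n -> C) : C := \sum_(i < n) `|u i - v i| ^+ 2.
Definition dist (u v : 'I_n -> C) : C := sqrtC (dist2 u v).

Definition invNLFT_unif_cont : Prop :=
  forall eps : C, 0 < eps -> exists2 delta : C, 0 < delta &
    forall a b a' b' g g' : 'I_n -> C,
      inS a b -> inS a' b' -> is_NLFT g a b -> is_NLFT g' a' b' ->
      sqrtC (dist2 a a' + dist2 b b') < delta -> dist g g' < eps.

Definition seq_a (k : nat) : 'I_n -> C := fun i =>
  if (i : nat) == 0%N then (k%:R)^-1
  else if (i : nat) == n.-1 then sqrtC (2^-1 - (k%:R ^+ 2)^-1) else 0.
Definition seq_b (k : nat) : 'I_n -> C := fun i =>
  if (i : nat) == 0%N then sqrtC (2^-1 - (k%:R ^+ 2)^-1)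
  else if (i : nat) == n.-1 then - (k%:R)^-1 else 0.

End NLFT.

(* Main.v *)
Require Import Defs.
From HB Require Import structures.
From mathcomp Require Import all_boot all_order all_algebra.
From mathcomp Require Import reals complex ring lra.
Import Order.TTheory GRing.Theory Num.Theory.
Set Implicit Arguments. Unset Strict Implicit. Unset Printing Implicit Defensive.
Local Open Scope ring_scope.

Section Gen.
Variable C : numClosedFieldType.

Lemma mx2_00 (p q r s : C) : mx2 p q r s ord0 ord0 = p. Proof. by rewrite mxE. Qed.
Lemma mx2_01 (p q r s : C) : mx2 p q r s ord0 ord_max = q. Proof. by rewrite mxE. Qed.
Lemma mx2_10 (p q r s : C) : mx2 p q r s ord_max ord0 = r. Proof. by rewrite mxE. Qed.
Lemma mx2_11 (p q r s : C) : mx2 p q r s ord_max ord_max = s. Proof. by rewrite mxE. Qed.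

Lemma ord2P (P : 'I_2 -> Prop) : P ord0 -> P ord_max -> forall i, P i.
Proof.
move=> h0 h1 [[|[|i]] Hi].
- by have -> : Ordinal Hi = ord0 by apply/val_inj.
- by have -> : Ordinal Hi = ord_max by apply/val_inj.
- by [].
Qed.

Lemma mulmx2 (A B : 'M[C]_2) i j :
  (A *m B) i j = A i ord0 * B ord0 j + A i ord_max * B ord_max j.
Proof.
rewrite mxE !big_ord_recl big_ord0 addr0.
by have -> : lift ord0 ord0 = ord_max :> 'I_2 by apply/val_inj.
Qed.

Lemma mx2_eq (A : 'M[C]_2) :
  A = mx2 (A ord0 ord0) (A ord0 ord_max) (A ord_max ord0) (A ord_max ord_max).
Proof.
apply/matrixP; elim/ord2P => /=; elim/ord2P => /=;
  by rewrite ?mx2_00 ?mx2_01 ?mx2_10 ?mx2_11.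
Qed.

Lemma mx2_mul (p q r s p' q' r' s' : C) :
  mx2 p q r s *m mx2 p' q' r' s' =
  mx2 (p * p' + q * r') (p * q' + q * s') (r * p' + s * r') (r * q' + s * s').
Proof.
apply/matrixP; elim/ord2P; elim/ord2P;
  by rewrite mulmx2 ?mx2_00 ?mx2_01 ?mx2_10 ?mx2_11.
Qed.

Lemma scale_mx2 (c p q r s : C) :
  c *: mx2 p q r s = mx2 (c * p) (c * q) (c * r) (c * s).
Proof.
apply/matrixP; elim/ord2P; elim/ord2P;
  by rewrite mxE ?mx2_00 ?mx2_01 ?mx2_10 ?mx2_11.
Qed.

Lemma mx2_1 : mx2 1 0 0 1 = 1 :> 'M[C]_2.
Proof.
apply/matrixP; elim/ord2P; elim/ord2P;
  by rewrite ?mx2_00 ?mx2_01 ?mx2_10 ?mx2_11 mxE.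
Qed.


Definition Dm (k : nat) (z : C) : 'M[C]_2 := mx2 (z ^+ k) 0 0 1.
Definition Em (k : nat) (z : C) : 'M[C]_2 := mx2 (z ^- k) 0 0 1.
Definition Lm (z : C) : 'M[C]_2 := mx2 z 0 0 1.
Definition Gm (g : C) : 'M[C]_2 :=
  mx2 ((sqrtC (1 + `|g| ^+ 2))^-1) ((sqrtC (1 + `|g| ^+ 2))^-1 * g)
      ((sqrtC (1 + `|g| ^+ 2))^-1 * - g^*) ((sqrtC (1 + `|g| ^+ 2))^-1).

Lemma factor_dec g k z : z != 0 -> nlft_factor g k z = Dm k z *m Gm g *m Em k z.
Proof.
move=> hz; rewrite /nlft_factor /Dm /Gm /Em !mx2_mul scale_mx2.
have hw : z ^+ k != 0 by rewrite expf_neq0.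
set w := z ^+ k; set c := (sqrtC _)^-1.
congr mx2; rewrite /=; field; rewrite ?hw //=.
Qed.

Lemma tele (f : nat -> 'M[C]_2) z (hz : z != 0) N :
  \prod_(k < N) (Dm k z *m f k *m Em k z) = (\prod_(k < N) (f k *m Lm z)) *m Em N z.
Proof.
elim: N => [|N IH].
  by rewrite !big_ord0 /Em expr0 invr1 mx2_1 mul1mx.
rewrite !big_ord_recr /= IH -!mulmxE -!mulmxA.
have hw : z ^+ N != 0 by rewrite expf_neq0.
have -> : Em N z *m (Dm N z *m (f N *m Em N z)) = f N *m Em N z.
  rewrite !mulmxA /Em /Dm mx2_mul.
  have -> : z ^- N * z ^+ N + 0 * 0 = 1 by rewrite mulr0 addr0 mulVf.
  by rewrite !mulr0 !mul0r !addr0 !add0r mulr1 mx2_1 mul1mx.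
congr (_ *m (_ *m _)).
rewrite /Lm /Em mx2_mul exprS.
congr mx2; rewrite ?mulr0 ?mul0r ?addr0 ?add0r ?mulr1 //.
set w := z ^+ N; field; by rewrite hz hw.
Qed.


Definition ispoly (f : C -> C) := exists p : {poly C}, forall z, f z = p.[z].
Definition polymx (F : C -> 'M[C]_2) := forall i j, ispoly (fun z => F z i j).

Lemma ispoly_ext f g : (forall z, f z = g z) -> ispoly g -> ispoly f.
Proof. by move=> e [p hp]; exists p => z; rewrite e hp. Qed.

Lemma ispoly_const c : ispoly (fun _ => c).
Proof. by exists c%:P => z; rewrite hornerC. Qed.
Lemma ispoly_id : ispoly (fun z => z).
Proof. by exists 'X => z; rewrite hornerX. Qed.
Lemma ispoly_add f g : ispoly f -> ispoly g -> ispoly (fun z => f z + g z).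
Proof. by move=> [p hp] [q hq]; exists (p + q) => z; rewrite hornerD hp hq. Qed.
Lemma ispoly_mul f g : ispoly f -> ispoly g -> ispoly (fun z => f z * g z).
Proof. by move=> [p hp] [q hq]; exists (p * q) => z; rewrite hornerM hp hq. Qed.
Lemma ispoly_exp k : ispoly (fun z => z ^+ k).
Proof. by exists ('X ^+ k) => z; rewrite hornerXn. Qed.

Lemma polymx_mul F G : polymx F -> polymx G -> polymx (fun z => F z *m G z).
Proof.
move=> hF hG i j; apply: ispoly_ext => [z|]; first by rewrite mulmx2.
by apply: ispoly_add; apply: ispoly_mul.
Qed.

Lemma polymx_prod (f : nat -> C -> 'M[C]_2) N :
  (forall k, polymx (f k)) -> polymx (fun z => \prod_(k < N) f k z).
Proof.
move=> hf; elim: N => [|N IH].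
  move=> i j; apply: (@ispoly_ext _ (fun _ => (1%:M : 'M[C]_2) i j)) => [z|].
    by rewrite big_ord0.
  exact: ispoly_const.
move=> i j; apply: (@ispoly_ext _ (fun z => ((\prod_(k < N) f k z) *m f N z) i j)) => [z|].
  by rewrite big_ord_recr /= -mulmxE.
exact: polymx_mul.
Qed.

Lemma polymx_Lm : polymx Lm.
Proof.
elim/ord2P; elim/ord2P; rewrite /Lm;
  (apply: ispoly_ext => [z|]; first by rewrite ?mx2_00 ?mx2_01 ?mx2_10 ?mx2_11);
  by [apply: ispoly_id | apply: ispoly_const].
Qed.

Lemma polymx_const (A : 'M[C]_2) : polymx (fun _ => A).
Proof. by move=> i j; apply: ispoly_const. Qed.

Lemma zero_of_poly (c : C) (p : {poly C}) :
  (forall z, z != 0 -> c = z * p.[z]) -> c = 0.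
Proof.
move=> h.
have hq : c%:P - 'X * p = 0.
  apply/eqP/negPn/negP => hq.
  set q := c%:P - 'X * p in hq.
  have H1 : all (root q) [seq (i.+1)%:R | i <- iota 0 (size q)].
    apply/allP => x /mapP [i _ ->]; rewrite /root /q hornerD hornerN hornerM hornerC hornerX.
    by rewrite -h ?subrr // pnatr_eq0.
  have H2 : uniq [seq (i.+1)%:R : C | i <- iota 0 (size q)].
    rewrite map_inj_uniq ?iota_uniq // => i j /eqP; rewrite eqr_nat => /eqP [] //.
  by have := max_poly_roots hq H1 H2; rewrite size_map size_iota ltnn.
have := congr1 (horner^~ 0) hq.
by rewrite /= hornerD hornerN hornerM hornerC hornerX mul0r subr0 horner0.
Qed.


Definition Rp (m : nat) (g : 'I_m.+2 -> C) (z : C) : 'M[C]_2 :=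
  \prod_(i < m.+1) (Gm (g (inord i.+1)) *m Lm z).

Lemma polymx_Rp m g : polymx (@Rp m g).
Proof.
apply: (@polymx_prod (fun i z => Gm (g (inord i.+1)) *m Lm z)) => k.
apply: polymx_mul; [exact: polymx_const | exact: polymx_Lm].
Qed.

Lemma key (m : nat) (g : 'I_m.+2 -> C) z : z != 0 ->
  NLFT_mx g z ord0 ord_max - g ord0 * NLFT_mx g z ord_max ord_max =
  (sqrtC (1 + `|g ord0| ^+ 2))^-1 * (1 + g ord0 * (g ord0)^*) * z * Rp g z ord0 ord_max.
Proof.
move=> hz; rewrite /NLFT_mx.
rewrite (eq_bigr (fun k : 'I_m.+2 => Dm k z *m Gm (g (inord k)) *m Em k z)); last first.
  by move=> k _; rewrite inord_val factor_dec.
rewrite (tele (fun k => Gm (g (inord k)))) // big_ord_recl -mulmxE.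
set X := Rp g z.
have -> : \big[*%R/1]_(i < m.+1) (Gm (g (inord (lift ord0 i))) *m Lm z) = X.
  by apply: eq_bigr => i _; rewrite lift0.
rewrite -!mulmxA !mulmx2 /Em /Lm /Gm !mx2_00 !mx2_01 !mx2_10 !mx2_11.
have -> : inord 0 = ord0 :> 'I_m.+2 by apply/val_inj; rewrite /= inordK.
ring.
Qed.

End Gen.



Section Real.
Variable R : realType.

Definition xr (k : nat) : R := 2^-1 - (k%:R ^+ 2)^-1.
Definition sr (k : nat) : R := Num.sqrt (xr k).

Lemma xr_pos k : (2 <= k)%N -> 0 < xr k.
Proof.
move=> hk; have hk2 : (2 : R) <= k%:R by rewrite (ler_nat R 2 k).
have h4 : (4 : R) <= k%:R ^+ 2 by nra.
have : (k%:R ^+ 2)^-1 <= (4 : R)^-1 by rewrite lef_pV2 ?posrE //; lra.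
rewrite /xr; lra.
Qed.

Lemma sr2 k : (2 <= k)%N -> sr k ^+ 2 = xr k.
Proof. by move=> hk; rewrite sqr_sqrtr // ltW // xr_pos. Qed.

Lemma sr_ge0 k : 0 <= sr k. Proof. exact: sqrtr_ge0. Qed.

Lemma real_gap k : (2 <= k)%N ->
  (Num.sqrt 2)^-1 <= sr k.+1 * k.+1%:R - sr k * k%:R.
Proof.
move=> hk.
have hk2 : (2 : R) <= k%:R by rewrite (ler_nat R 2 k).
have hk0 : (k%:R : R) != 0 by apply/eqP => e; rewrite e in hk2; lra.
have hk1 : (k.+1%:R : R) = k%:R + 1 by rewrite mulrS addrC.
have hk10 : (k%:R + 1 : R) != 0 by apply/eqP => e; lra.
set u := sr k * k%:R; set v := sr k.+1 * k.+1%:R; set w := (Num.sqrt (2 : R))^-1.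
have hu : u ^+ 2 = k%:R ^+ 2 / 2 - 1.
  by rewrite /u exprMn sr2 // /xr; field.
have hv : v ^+ 2 = (k%:R + 1) ^+ 2 / 2 - 1.
  by rewrite /v exprMn sr2 ?(leq_trans hk) // /xr hk1; field.
have ht : Num.sqrt (2 : R) ^+ 2 = 2 by rewrite sqr_sqrtr.
have htp : 0 < Num.sqrt (2 : R) by rewrite sqrtr_gt0.
have hw : w ^+ 2 = 2^-1 by rewrite /w exprVn ht.
have hw0 : 0 < w by rewrite /w invr_gt0.
have hu0 : 0 <= u by rewrite /u mulr_ge0 ?sr_ge0 ?ler0n.
have hv0 : 0 <= v by rewrite /v mulr_ge0 ?sr_ge0 ?ler0n.
have h2uw : (2 * u * w) ^+ 2 <= k%:R ^+ 2.
  have -> : (2 * u * w) ^+ 2 = 4 * u ^+ 2 * w ^+ 2 by ring.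
  rewrite hu hw; lra.
have h2uw' : 2 * u * w <= k%:R.
  have h0 : 0 <= 2 * u * w by apply: mulr_ge0; [apply: mulr_ge0 => // | exact: ltW].
  nra.
have hsq : (u + w) ^+ 2 <= v ^+ 2.
  rewrite hv sqrrD hu hw; lra.
nra.
Qed.


Lemma real_bound k : (2 <= k)%N ->
  2 * ((k.+1%:R)^-1 - (k%:R)^-1) ^+ 2 + 2 * (sr k.+1 - sr k) ^+ 2
    <= 10 / (k%:R : R) ^+ 4.
Proof.
move=> hk.
have hk2 : (2 : R) <= k%:R by rewrite (ler_nat R 2 k).
have hk1 : (k.+1%:R : R) = k%:R + 1 by rewrite mulrS addrC.
set p := (k%:R : R)^-1; set q := (k.+1%:R : R)^-1.
have hp : p * k%:R = 1 by rewrite /p mulVf //; apply/eqP => e; rewrite e in hk2; lra.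
have hq : q * (k%:R + 1) = 1 by rewrite /q hk1 mulVf //; apply/eqP => e; lra.
have hp0 : 0 < p by rewrite /p invr_gt0; lra.
have hq0 : 0 < q by rewrite /q invr_gt0 ltr0n.
have hp2 : p <= 2^-1 by nra.
have hpq : p - q = p * q by nra.
have hqp : q <= p by nra.
have hs : sr k ^+ 2 = 2^-1 - p ^+ 2 by rewrite sr2 // /xr /p exprVn.
have hs' : sr k.+1 ^+ 2 = 2^-1 - q ^+ 2 by rewrite sr2 ?(leq_trans hk) // /xr /q exprVn.
have s0 := sr_ge0 k; have s0' := sr_ge0 k.+1.
have hsh : 2^-1 <= sr k by nra.
have hsh' : 2^-1 <= sr k.+1 by nra.
have e1 : (q - p) ^+ 2 <= p ^+ 4 by nra.
have e2 : (sr k.+1 - sr k) ^+ 2 * (sr k.+1 + sr k) ^+ 2 = (p ^+ 2 - q ^+ 2) ^+ 2.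
  have -> : (sr k.+1 - sr k) ^+ 2 * (sr k.+1 + sr k) ^+ 2 = (sr k.+1 ^+ 2 - sr k ^+ 2) ^+ 2 by ring.
  rewrite hs hs'; ring.
have e3 : (p ^+ 2 - q ^+ 2) ^+ 2 <= p ^+ 4.
  have -> : (p ^+ 2 - q ^+ 2) ^+ 2 = (p - q) ^+ 2 * (p + q) ^+ 2 by ring.
  have f1 : (p - q) ^+ 2 <= p ^+ 4 by nra.
  have f2 : (p + q) ^+ 2 <= 1 by nra.
  have f3 : 0 <= (p - q) ^+ 2 by exact: sqr_ge0.
  nra.
have e4 : (sr k.+1 - sr k) ^+ 2 <= p ^+ 4.
  have f1 : 1 <= (sr k.+1 + sr k) ^+ 2 by nra.
  have f2 : 0 <= (sr k.+1 - sr k) ^+ 2 by exact: sqr_ge0.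
  nra.
have -> : 10 / (k%:R : R) ^+ 4 = 10 * p ^+ 4 by rewrite /p exprVn.
have : 0 <= p ^+ 4 by rewrite exprn_ge0 // ltW.
lra.
Qed.

End Real.



Section Spec.
Variable R : realType.
Local Notation C := (R[i]).

Local Notation "x %:C" := (real_complex R x) (format "x %:C") : ring_scope.

Lemma natC k : (k%:R : C) = (k%:R : R)%:C.
Proof. by rewrite rmorph_nat. Qed.

Lemma xE k : (2^-1 - (k%:R ^+ 2)^-1 : C) = (2^-1 - (k%:R ^+ 2)^-1 : R)%:C.
Proof. by rewrite rmorphB !fmorphV rmorphXn !rmorph_nat. Qed.

Lemma sqrtCC (x : R) : 0 <= x -> sqrtC (x%:C) = (Num.sqrt x)%:C.
Proof.
move=> hx; rewrite -[x in LHS](sqr_sqrtr hx) rmorphXn sqrCK //.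
by rewrite ler0c sqrtr_ge0.
Qed.

Lemma normC2 (x : R) : `|x%:C| ^+ 2 = (x ^+ 2)%:C.
Proof.
rewrite normc_def /= expr0n /= addr0 sqrtr_sqr -rmorphXn.
by rewrite real_normK // num_real.
Qed.

Lemma x_pos k : (2 <= k)%N -> 0 < (2^-1 - (k%:R ^+ 2)^-1 : R).
Proof.
move=> hk; have hk2 : (2 : R) <= k%:R by rewrite (ler_nat R 2 k).
have h4 : (4 : R) <= k%:R ^+ 2 by nra.
have : (k%:R ^+ 2)^-1 <= (4 : R)^-1 by rewrite lef_pV2 ?posrE //; lra.
lra.
Qed.


Variable m : nat.
Local Notation n := m.+2.

Lemma sum2 (f : 'I_n -> C) :
  (forall i : 'I_n, i != ord0 -> i != ord_max -> f i = 0) ->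
  \sum_i f i = f ord0 + f ord_max.
Proof.
move=> h; rewrite (bigD1 ord0) // (bigD1 ord_max) //= big1 ?addr0 //.
by move=> i /andP [h1 h2]; apply: h.
Qed.

Definition Ak (k : nat) : C := (k%:R)^-1.
Definition Sk (k : nat) : C := sqrtC (2^-1 - (k%:R ^+ 2)^-1).

Lemma Ak_ge0 k : 0 <= Ak k.
Proof. by rewrite /Ak invr_ge0 ler0n. Qed.
Lemma Sk_ge0 k : (2 <= k)%N -> 0 <= Sk k.
Proof. by move=> hk; rewrite /Sk sqrtC_ge0 xE ler0c ltW ?x_pos. Qed.
Lemma Sk2 k : Sk k ^+ 2 = 2^-1 - (k%:R ^+ 2)^-1.
Proof. exact: sqrtCK. Qed.

Lemma seq_a0 k : @seq_a C n k ord0 = Ak k. Proof. by []. Qed.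
Lemma seq_a1 k : @seq_a C n k ord_max = Sk k. Proof. by rewrite /seq_a /= eqxx. Qed.
Lemma seq_b0 k : @seq_b C n k ord0 = Sk k. Proof. by []. Qed.
Lemma seq_b1 k : @seq_b C n k ord_max = - Ak k. Proof. by rewrite /seq_b /= eqxx. Qed.

Lemma seq_mid (i : 'I_n) : i != ord0 -> i != ord_max -> forall k,
  @seq_a C n k i = 0 /\ @seq_b C n k i = 0.
Proof.
move=> h0 h1 k; rewrite /seq_a /seq_b.
have -> : ((i : nat) == 0%N) = false by apply/negbTE; apply: contra h0 => /eqP e; apply/eqP/val_inj.
have -> : ((i : nat) == n.-1) = false by apply/negbTE; apply: contra h1 => /eqP e; apply/eqP/val_inj.
by [].
Qed.

Lemma la_seq k z : la (@seq_a C n k) z = Ak k + Sk k * z ^- m.+1.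
Proof.
rewrite /la sum2 ?seq_a0 ?seq_a1 /= ?expr0 ?invr1 ?mulr1 //.
by move=> i h0 h1; rewrite (seq_mid h0 h1 k).1 mul0r.
Qed.

Lemma lb_seq k z : lb (@seq_b C n k) z = Sk k - Ak k * z ^+ m.+1.
Proof.
rewrite /lb sum2 ?seq_b0 ?seq_b1 /= ?expr0 ?mulr1 ?mulNr //.
by move=> i h0 h1; rewrite (seq_mid h0 h1 k).2 mul0r.
Qed.

Lemma conjA k : (Ak k)^* = Ak k. Proof. exact/geC0_conj/Ak_ge0. Qed.
Lemma conjS k : (2 <= k)%N -> (Sk k)^* = Sk k. Proof. by move=> hk; exact/geC0_conj/Sk_ge0. Qed.

Lemma lsa_seq k z : (2 <= k)%N -> lstar (la (@seq_a C n k)) z = Ak k + Sk k * z ^+ m.+1.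
Proof.
move=> hk; rewrite /lstar la_seq rmorphD rmorphM /= conjA conjS //.
rewrite exprVn invrK rmorphXn /=; congr (_ + _ * _ ^+ _); exact: conjCK.
Qed.

Lemma lsb_seq k z : (2 <= k)%N -> lstar (lb (@seq_b C n k)) z = Sk k - Ak k * z ^- m.+1.
Proof.
move=> hk; rewrite /lstar lb_seq rmorphB rmorphM /= conjA conjS //.
rewrite exprVn fmorphV rmorphXn /=; congr (_ - _ * (_ ^+ _)^-1); exact: conjCK.
Qed.


Lemma kC_neq0 k : (2 <= k)%N -> (k%:R : C) != 0.
Proof. by move=> hk; rewrite pnatr_eq0 -lt0n ltnW. Qed.

Lemma inS_seq k : (2 <= k)%N -> inS (@seq_a C n k) (@seq_b C n k).
Proof.
move=> hk; split.
  move=> i hi; have -> : i = ord0 by apply/val_inj.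
  by rewrite seq_a0 /Ak invr_gt0 ltr0n ltnW.
move=> z hz; rewrite la_seq lsa_seq // lb_seq lsb_seq //.
have hw : z ^+ m.+1 != 0 by rewrite expf_neq0.
set w := z ^+ m.+1.
have -> : (Ak k + Sk k * w^-1) * (Ak k + Sk k * w) + (Sk k - Ak k * w) * (Sk k - Ak k * w^-1)
   = 2 * (Ak k ^+ 2 + Sk k ^+ 2) by field.
rewrite Sk2 /Ak; have hk0 := kC_neq0 hk.
by field.
Qed.


Lemma bump0 i : bump 0 i = i.+1. Proof. by rewrite /bump leq0n add1n. Qed.

Definition gam (k : nat) : 'I_n -> C := fun i =>
  if (i : nat) == 0%N then Sk k * k%:R else if (i : nat) == m.+1 then -1 else 0.

Lemma factor0 j z : nlft_factor (0 : C) j z = 1.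
Proof.
rewrite /nlft_factor normr0 expr0n /= addr0 sqrtC1 invr1 scale1r mul0r.
by rewrite rmorph0 oppr0 mul0r mx2_1.
Qed.

Lemma c0c1 k : (2 <= k)%N ->
  (sqrtC (1 + `|Sk k * k%:R| ^+ 2))^-1 * (sqrtC (1 + `|-1 : C| ^+ 2))^-1 = Ak k.
Proof.
move=> hk; have hk0 := kC_neq0 hk.
have e1 : 1 + `|Sk k * k%:R| ^+ 2 = (k%:R ^+ 2 / 2 : C).
  rewrite ger0_norm ?mulr_ge0 ?Sk_ge0 ?ler0n // exprMn Sk2.
  by field.
have e2 : 1 + `|-1 : C| ^+ 2 = 2 by rewrite normrN normr1 expr1n.
rewrite e1 e2 -invfM -sqrtCM ?nnegrE ?divr_ge0 ?exprn_ge0 ?ler0n //.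
rewrite divfK ?pnatr_eq0 // sqrCK ?ler0n //.
Qed.

Lemma nlft_gam k : (2 <= k)%N -> is_NLFT (gam k) (@seq_a C n k) (@seq_b C n k).
Proof.
move=> hk z hz.
rewrite /NLFT_mx big_ord_recl big_ord_recr /= big1 => [|i _]; last first.
  have -> : gam k (lift ord0 (widen_ord (leqnSn m) i)) = 0.
    by rewrite /gam /= bump0 eqSS ltn_eqF.
  exact: factor0.
rewrite mul1r.
have -> : gam k ord0 = Sk k * k%:R by [].
have -> : gam k (lift ord0 ord_max) = -1 by rewrite /gam /= bump0 eqxx.
rewrite bump0.
rewrite /nlft_factor -mulmxE -scalemxAl -scalemxAr scalerA c0c1 //.
rewrite mx2_mul scale_mx2 la_seq lb_seq lsa_seq // lsb_seq //.
rewrite [(Sk k * _)^*]geC0_conj ?mulr_ge0 ?Sk_ge0 ?ler0n //.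
have -> : (-1 : C)^* = -1 by exact: conjCN1.
have hk0 := kC_neq0 hk.
have hw : z ^+ m.+1 != 0 by rewrite expf_neq0.
set w := z ^+ m.+1; rewrite /Ak.
congr mx2; rewrite expr0 ?invr1. all: field; by rewrite ?hw ?hk0.
Qed.


Lemma g0_unique k (g : 'I_n -> C) : (2 <= k)%N ->
  is_NLFT g (@seq_a C n k) (@seq_b C n k) -> g ord0 = Sk k * k%:R.
Proof.
move=> hk H.
set K := (sqrtC (1 + `|g ord0| ^+ 2))^-1 * (1 + g ord0 * (g ord0)^*).
have h : forall z, z != 0 -> Sk k - g ord0 * Ak k =
    z * (K * Rp g z ord0 ord_max + z ^+ m * (Ak k + g ord0 * Sk k)).
  move=> z hz; have := key g hz; rewrite (H z hz) mx2_01 mx2_11 lb_seq lsa_seq // => e.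
  transitivity ((Sk k - Ak k * z ^+ m.+1 - g ord0 * (Ak k + Sk k * z ^+ m.+1))
      + z ^+ m.+1 * (Ak k + g ord0 * Sk k)). ring.
  rewrite e -/K [z ^+ m.+1]exprS; ring.
have [p hp] := polymx_Rp g ord0 ord_max.
have e0 := @zero_of_poly _ (Sk k - g ord0 * Ak k) (K%:P * p + 'X^m * (Ak k + g ord0 * Sk k)%:P).
have {e0} e0 : Sk k - g ord0 * Ak k = 0.
  apply: e0 => z hz; rewrite (h z hz) hornerD !hornerM hornerC hornerXn hornerC -hp //.
have hk0 := kC_neq0 hk.
apply/eqP; rewrite -subr_eq0 -(mulIr_eq0 _ (mulIf (invr_neq0 hk0))).
apply/eqP; rewrite -[RHS]oppr0 -e0 /Ak; field; exact: hk0.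
Qed.


Lemma SkC k : (2 <= k)%N -> Sk k = (sr R k)%:C.
Proof. by move=> hk; rewrite /Sk xE sqrtCC // ltW // xr_pos. Qed.
Lemma AkC k : Ak k = ((k%:R : R)^-1)%:C.
Proof. by rewrite /Ak fmorphV rmorph_nat. Qed.

Lemma gap_C k (g g' : 'I_n -> C) : (2 <= k)%N ->
  is_NLFT g (@seq_a C n k) (@seq_b C n k) ->
  is_NLFT g' (@seq_a C n k.+1) (@seq_b C n k.+1) ->
  (sqrtC 2)^-1 <= dist g' g.
Proof.
move=> hk hg hg'.
have hk' : (2 <= k.+1)%N by apply: leq_trans hk _.
have e : g' ord0 - g ord0 = (sr R k.+1 * k.+1%:R - sr R k * k%:R)%:C.
  by rewrite (g0_unique hk' hg') (g0_unique hk hg) !SkC // rmorphB !rmorphM !rmorph_nat.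
have hr := real_gap R hk.
have hr0 : 0 <= sr R k.+1 * k.+1%:R - sr R k * k%:R.
  by apply: le_trans hr; rewrite invr_ge0 sqrtr_ge0.
have h2 : (2 : C) = (2 : R)%:C by rewrite rmorph_nat.
have -> : (sqrtC 2)^-1 = ((Num.sqrt (2 : R))^-1)%:C.
  by rewrite h2 sqrtCC // fmorphV.
apply: (@le_trans _ _ (sr R k.+1 * k.+1%:R - sr R k * k%:R)%:C); first by rewrite lecR.
rewrite /dist -[X in X <= _]sqrCK ?ler0c //.
rewrite ler_sqrtC ?nnegrE ?exprn_ge0 ?ler0c //; last first.
  by rewrite /dist2 sumr_ge0 // => i _; rewrite exprn_ge0.
rewrite /dist2 (bigD1 ord0) //= e normC2 -rmorphXn lerDl sumr_ge0 // => i _.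
by rewrite exprn_ge0.
Qed.


Lemma rCB (x y : R) : x%:C - y%:C = (x - y)%:C. Proof. by rewrite rmorphB. Qed.
Lemma rCN (x : R) : - x%:C = (- x)%:C. Proof. by rewrite rmorphN. Qed.
Lemma rCD (x y : R) : x%:C + y%:C = (x + y)%:C. Proof. by rewrite rmorphD. Qed.

Lemma bound_C k : (2 <= k)%N ->
  dist2 (@seq_a C n k.+1) (@seq_a C n k) + dist2 (@seq_b C n k.+1) (@seq_b C n k)
    <= 10 / (k%:R ^+ 4).
Proof.
move=> hk.
have hk' : (2 <= k.+1)%N by apply: leq_trans hk _.
rewrite /dist2 !sum2; try by move=> i h0 h1;
  rewrite ?(seq_mid h0 h1 k).1 ?(seq_mid h0 h1 k.+1).1 ?(seq_mid h0 h1 k).2 ?(seq_mid h0 h1 k.+1).2 subrr normr0 expr0n.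
rewrite !seq_a0 !seq_a1 !seq_b0 !seq_b1 !SkC // !AkC (rCB (k.+1%:R^-1) (k%:R^-1)) (rCB (sr R k.+1) (sr R k)).
rewrite (rCN (k.+1%:R^-1)) (rCN (k%:R^-1)) (rCB (- k.+1%:R^-1) (- k%:R^-1)) !normC2.
rewrite (rCD ((sr R k.+1 - sr R k) ^+ 2)) (rCD ((k.+1%:R^-1 - k%:R^-1) ^+ 2)) rCD.
have -> : (10 / k%:R ^+ 4 : C) = (10 / (k%:R : R) ^+ 4)%:C.
  by rewrite rmorphM fmorphV rmorphXn !rmorph_nat.
rewrite lecR.
have := real_bound R hk.
set q := (k.+1%:R : R)^-1; set p := (k%:R : R)^-1.
set s' := sr R k.+1; set s := sr R k.
have -> : (q - p) ^+ 2 + (s' - s) ^+ 2 + ((s' - s) ^+ 2 + (- q - - p) ^+ 2)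
  = 2 * (q - p) ^+ 2 + 2 * (s' - s) ^+ 2 by ring.
by [].
Qed.


Lemma real_small (d : R) : 0 < d ->
  (10 / ((Num.bound (10 / d ^+ 2)).+2%:R : R) ^+ 4) < d ^+ 2.
Proof.
move=> hd.
have hd2 : 0 < d ^+ 2 by rewrite exprn_gt0.
have hb : 10 / d ^+ 2 < (Num.bound (10 / d ^+ 2))%:R.
  by apply: archi_boundP; rewrite divr_ge0 // ltW.
set N := Num.bound _ in hb *.
have hN : (N.+2%:R : R) = N%:R + 2 by rewrite -addn2 natrD.
rewrite hN.
set x := (N%:R : R) in hb *.
have hx0 : 0 <= x by rewrite /x ler0n.
have h10 : 10 < x * d ^+ 2 by rewrite -ltr_pdivrMr.
have hk1 : x + 2 <= (x + 2) ^+ 4.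
  have : 1 <= x + 2 by lra.
  move=> h1; have h2 : 1 <= (x + 2) ^+ 2 by nra.
  have h3 : x + 2 <= (x + 2) ^+ 2 by nra.
  have -> : (x + 2) ^+ 4 = ((x + 2) ^+ 2) ^+ 2 by rewrite -exprM.
  nra.
have hpos : 0 < (x + 2) ^+ 4 by rewrite exprn_gt0 //; lra.
rewrite ltr_pdivrMr //.
nra.
Qed.

End Spec.

Unset Implicit Arguments.
Local Open Scope complex_scope.

Theorem mainTheorem10 (R : realType) (n : nat) : (2 <= n)%N ->
  ~ invNLFT_unif_cont (R[i]) n /\
  forall k : nat, (2 <= k)%N ->
    [/\ inS (@seq_a (R[i]) n k) (@seq_b (R[i]) n k),
        dist2 (@seq_a (R[i]) n k.+1) (@seq_a (R[i]) n k)
          + dist2 (@seq_b (R[i]) n k.+1) (@seq_b (R[i]) n k) <= 10 / (k%:R ^+ 4),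
        (forall g g' : 'I_n -> R[i],
           is_NLFT g (@seq_a (R[i]) n k) (@seq_b (R[i]) n k) ->
           is_NLFT g' (@seq_a (R[i]) n k.+1) (@seq_b (R[i]) n k.+1) ->
           (sqrtC 2)^-1 <= dist g' g)
      & exists g : 'I_n -> R[i], is_NLFT g (@seq_a (R[i]) n k) (@seq_b (R[i]) n k)].
Proof.
case: n => [|[|m]] // _.
have P : forall k : nat, (2 <= k)%N ->
    [/\ inS (@seq_a (R[i]) m.+2 k) (@seq_b (R[i]) m.+2 k),
        dist2 (@seq_a (R[i]) m.+2 k.+1) (@seq_a (R[i]) m.+2 k)
          + dist2 (@seq_b (R[i]) m.+2 k.+1) (@seq_b (R[i]) m.+2 k) <= 10 / (k%:R ^+ 4),
        (forall g g' : 'I_m.+2 -> R[i],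
           is_NLFT g (@seq_a (R[i]) m.+2 k) (@seq_b (R[i]) m.+2 k) ->
           is_NLFT g' (@seq_a (R[i]) m.+2 k.+1) (@seq_b (R[i]) m.+2 k.+1) ->
           (sqrtC 2)^-1 <= dist g' g)
      & exists g : 'I_m.+2 -> R[i], is_NLFT g (@seq_a (R[i]) m.+2 k) (@seq_b (R[i]) m.+2 k)].
  move=> k hk; split.
  - exact: inS_seq.
  - exact: bound_C.
  - by move=> g g'; apply: gap_C.
  - by exists (@gam R m k); apply: nlft_gam.
split; last exact: P.
move=> H.
have eps0 : 0 < (sqrtC 2 : R[i])^-1 by rewrite invr_gt0 sqrtC_gt0 ltr0n.
have [delta hd Hd] := H _ eps0.
have hdE : delta = (complex.Re delta)%:C.
  have gen : forall d : R[i], 0 < d -> d = (complex.Re d)%:C.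
    by move=> [a b]; rewrite ltcE => /andP [/eqP /= -> _].
  exact: gen.
have hd0 : 0 < complex.Re delta by move: hd; rewrite hdE ltcR.
set k := (Num.bound (10 / complex.Re delta ^+ 2)).+2.
have hk : (2 <= k)%N by [].
have hk' : (2 <= k.+1)%N by [].
have [i1 b1 g1 [gk hgk]] := P k hk.
have [i2 _ _ [gk1 hgk1]] := P k.+1 hk'.
suff hlt : dist gk1 gk < (sqrtC 2)^-1.
  by move: (g1 gk gk1 hgk hgk1) => /(lt_le_trans hlt); rewrite ltxx.
apply: (Hd _ _ _ _ gk1 gk i2 i1 hgk1 hgk).
have hX0 : 0 <= dist2 (@seq_a (R[i]) m.+2 k.+1) (@seq_a (R[i]) m.+2 k)
          + dist2 (@seq_b (R[i]) m.+2 k.+1) (@seq_b (R[i]) m.+2 k).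
  by rewrite addr_ge0 // sumr_ge0 // => i _; rewrite exprn_ge0.
apply: (le_lt_trans (y := sqrtC (10 / (k%:R ^+ 4)))).
  rewrite ler_sqrtC ?nnegrE //.
  by rewrite divr_ge0 ?exprn_ge0 ?ler0n.
rewrite -[X in _ < X](@sqrCK _ delta) ?ltW //.
rewrite ltr_sqrtC ?nnegrE ?exprn_ge0 ?divr_ge0 ?ler0n ?ltW //.
have -> : (10 / k%:R ^+ 4 : R[i]) = (10 / (k%:R : R) ^+ 4)%:C.
  by rewrite rmorphM fmorphV rmorphXn !rmorph_nat.
rewrite hdE.
have -> : ((complex.Re delta)%:C ^+ 2 : R[i]) = ((complex.Re delta) ^+ 2)%:C by rewrite rmorphXn.
rewrite ltcR.
exact: real_small.
by rewrite exprn_gt0 // ltr0n.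
Qed.
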